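(* In the setting below, suppose $\mathbb{E}(m_0-\tilde m_0)=M_0$. Then for every $t\ge1$, $$\mathbb{E}(m_t-\tilde m_t)=\Big(\prod_{i=0}^{t-1}A_{t-i}\Big)M_0+\sum_{i=0}^{t-2}\Big(\prod_{j=0}^{i}A_{t-j}\Big)C_{t-1-i}+C_t,$$ where $A_t=F-\tilde K_tHF$, $C_t=-\tilde K_t\epsilon_t$, and $\prod_{j=0}^{i}A_{t-j}=A_tA_{t-1}\cdots A_{t-i}$.
   Context: Let $F,B,H,R,Q\in\mathbb{R}^{2\times2}$. Target motion: $x_{t+1}=Fx_t+Bu_t+w_t$, $w_t\sim\mathcal{N}(0,R)$; measurement $z_t=Hx_t+v_t$, $v_t\sim\mathcal{N}(0,Q)$; spoofed measurement $\tilde z_t=z_t+\epsilon_t$ with deterministic spoofing signals $\epsilon_t\in\mathbb{R}^2$ and deterministic controls $u_t$. Kalman filter: from initial $(m_0,\Sigma_0)$ and measurements $y_t$, $\Sigma_{t|t-1}=F\Sigma_{t-1}F^T+R$, $K_t=\Sigma_{t|t-1}H^T(H\Sigma_{t|t-1}H^T+Q)^{-1}$, $\Sigma_t=(I-K_tH)\Sigma_{t|t-1}$, $m_t=(I-K_tH)(Fm_{t-1}+Bu_{t-1})+K_ty_t$; the gains depend only on the (deterministic) initial covariance and model matrices. $(m_t,K_t)$ come from the filter with initial $(m_0,\Sigma_0)$ fed $z_t$; $(\tilde m_t,\tilde K_t)$ from the filter with initial $(\tilde m_0,\tilde\Sigma_0)$ fed $\tilde z_t$. As in the paper, the measurement is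 modeled relative to the filter estimate as $z_t=H(Fm_{t-1}+Bu_{t-1}+w_t)+v_t$ with zero-mean noises $w_t,v_t$, so that $\mathbb{E}[z_t-H(Fm_{t-1}+Bu_{t-1})]=0$. *)

(* Defs.v *)
From HB Require Import structures.
From mathcomp Require Import all_boot all_order all_algebra.
From mathcomp Require Import all_classical all_reals all_analysis.
Set Implicit Arguments. Unset Strict Implicit. Unset Printing Implicit Defensive.
Import Order.TTheory GRing.Theory Num.Theory.
Local Open Scope ring_scope.

Definition kf_pred {R : fieldType} (F Rw : 'M[R]_2) (S : 'M[R]_2) : 'M[R]_2 :=
  F *m S *m F^T + Rw.

Definition kf_gain_of {R : fieldType} (H Q : 'M[R]_2) (P : 'M[R]_2) : 'M[R]_2 :=
  P *m H^T *m invmx (H *m P *m H^T + Q).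

Fixpoint kf_cov {R : fieldType} (F Rw H Q S0 : 'M[R]_2) (t : nat) : 'M[R]_2 :=
  match t with
  | 0 => S0
  | t'.+1 =>
      let P := kf_pred F Rw (kf_cov F Rw H Q S0 t') in
      (1%:M - kf_gain_of H Q P *m H) *m P
  end.

(* K_t (meaningful for t >= 1): gain computed from Sigma_{t-1}. *)
Definition kf_gain {R : fieldType} (F Rw H Q S0 : 'M[R]_2) (t : nat) : 'M[R]_2 :=
  kf_gain_of H Q (kf_pred F Rw (kf_cov F Rw H Q S0 t.-1)).

Definition kf_update {R : fieldType} (F B H K : 'M[R]_2) (uprev mprev y : 'cV[R]_2)
  : 'cV[R]_2 :=
  (1%:M - K *m H) *m (F *m mprev + B *m uprev) + K *m y.

Definition vec_integrable {d} {T : measurableType d} {R : realType}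
  (P : probability T R) (X : T -> 'cV[R]_2) : Prop :=
  forall i : 'I_2, (fun w => X w i ord0) \in Lfun P 1.

Definition Evec {d} {T : measurableType d} {R : realType}
  (P : probability T R) (X : T -> 'cV[R]_2) : 'cV[R]_2 :=
  \col_(i < 2) fine ('E_P[fun w => X w i ord0])%E.

(* Main.v *)
Require Import Defs.
From HB Require Import structures.
From mathcomp Require Import all_boot all_order all_algebra.
From mathcomp Require Import all_classical all_reals all_analysis.
From mathcomp Require Import ring lra.
Import Order.TTheory GRing.Theory Num.Theory.
Local Open Scope ring_scope.

Section H.
Context (R : realType) (d : measure_display) (T : measurableType d)
  (P : probability T R).

Lemma Lfun_lin (f g : T -> R) (a b : R) : f \in Lfun P 1 -> g \in Lfun P 1 ->
  (fun w => a * f w + b * g w) \in Lfun P 1.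
Proof.
move=> hf hg.
have h1 : a \o* f \in Lfun P 1 by exact: (@Lfun_scale _ _ _ P f a 1).
have h2 : b \o* g \in Lfun P 1 by exact: (@Lfun_scale _ _ _ P g b 1).
have H := @rpredD _ (hoelder_Lfun__canonical__Algebra_AddClosed P (lexx 1%E)) _ _ h1 h2. have E : (fun w => a * f w + b * g w) = a \o* f + b \o* g. apply/funext => w. by rewrite !fctE /= [a * _]mulrC [b * _]mulrC. rewrite E. exact H.
Qed.

Lemma E_lin (f g : T -> R) (a b : R) : f \in Lfun P 1 -> g \in Lfun P 1 ->
  fine 'E_P[fun w => a * f w + b * g w] = a * fine 'E_P[f] + b * fine 'E_P[g].
Proof.
move=> hf hg.
have h1 : a \o* f \in Lfun P 1 by exact: (@Lfun_scale _ _ _ P f a 1).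
have h2 : b \o* g \in Lfun P 1 by exact: (@Lfun_scale _ _ _ P g b 1).
have -> : (fun w => a * f w + b * g w) = (a \o* f) \+ (b \o* g) by apply/funext => w; rewrite /= [a * _]mulrC [b * _]mulrC.
rewrite expectationD // !expectationZl //.
rewrite fineD ?fin_numM ?expectation_fin_num //.
by rewrite !fineM ?expectation_fin_num.
Qed.

Lemma sum2 (G : 'I_2 -> R) : \sum_(j < 2) G j = G 0 + G 1.
Proof. by rewrite big_ord_recl big_ord1; congr (_ + G _); apply/val_inj. Qed.

Lemma entD (X Y : 'cV[R]_2) i : (X + Y) i ord0 = X i ord0 + Y i ord0.
Proof. by rewrite mxE. Qed.
Lemma entN (X : 'cV[R]_2) i : (- X) i ord0 = - X i ord0.
Proof. by rewrite mxE. Qed.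

Lemma mxcomp2 (M : 'M[R]_2) (x : 'cV[R]_2) i :
  (M *m x) i ord0 = M i 0 * x 0 ord0 + M i 1 * x 1 ord0.
Proof. by rewrite mxE big_ord_recl big_ord1; congr (_ + M i _ * x _ _); apply/val_inj. Qed.

Lemma vec_affine (X Y : T -> 'cV[R]_2) (M N : 'M[R]_2) (c : 'cV[R]_2) :
  vec_integrable P X -> vec_integrable P Y ->
  vec_integrable P (fun w => M *m X w + N *m Y w + c) /\
  Evec P (fun w => M *m X w + N *m Y w + c) = M *m Evec P X + N *m Evec P Y + c.
Proof.
move=> hX hY.
have key : forall i : 'I_2,
  let g1 := fun w => M i 0 * X w 0 ord0 + M i 1 * X w 1 ord0 in
  let g2 := fun w => N i 0 * Y w 0 ord0 + N i 1 * Y w 1 ord0 in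
  let g3 := fun w => 1 * g1 w + 1 * g2 w in
  let g4 := fun w => 1 * g3 w + c i ord0 * (cst 1 : T -> R) w in
  (fun w => (M *m X w + N *m Y w + c) i ord0) = g4 /\ g4 \in Lfun P 1 /\
  fine 'E_P[g4] = (M *m Evec P X + N *m Evec P Y + c) i ord0.
  move=> i g1 g2 g3 g4.
  have h1 : g1 \in Lfun P 1 by apply: Lfun_lin; [exact: hX|exact: hX].
  have h2 : g2 \in Lfun P 1 by apply: Lfun_lin; [exact: hY|exact: hY].
  have h3 : g3 \in Lfun P 1 by exact: Lfun_lin.
  have hc : (cst 1 : T -> R) \in Lfun P 1 by exact: Lfun_cst.
  split; first by apply/funext => w; rewrite /g4 /g3 /g1 /g2 !mxE !sum2 /=; ring.
  split; first exact: Lfun_lin.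
  rewrite E_lin // E_lin // E_lin ?hX ?hY // E_lin ?hX ?hY //.
  rewrite expectation_cst /= !mxE !sum2 !mxE; ring.
split.
  by move=> i; have [-> [h _]] := key i.
apply/matrixP => i j; rewrite (ord1 j) mxE.
by have [-> [_ ->]] := key i.
Qed.
End H.

Lemma rec_alg (R : realType) (F B H K L : 'M[R]_2) (a b c e f g : 'cV[R]_2) :
 kf_update F B H K c a (H *m (F *m a + B *m c + e) + f)
 - kf_update F B H L c b (H *m (F *m a + B *m c + e) + f + g)
 = (F - L *m H *m F) *m (a - b) + (K - L) *m (H *m e + 1%:M *m f + 0) + - (L *m g).
Proof.
rewrite /kf_update !mulmxBl !mul1mx addr0.
apply/matrixP => i j; rewrite (ord1 j).
rewrite !(mxE, sum2) /=; ring.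
Qed.

Theorem corollary1 (R : realType) (d : measure_display) (T : measurableType d)
  (P : probability T R)
  (F B H Rw Q S0 St0 : 'M[R]_2)
  (u eps : nat -> 'cV[R]_2)
  (w v : nat -> T -> 'cV[R]_2)
  (z m mt : nat -> T -> 'cV[R]_2)
  (M0 : 'cV[R]_2) :
  (* zero-mean process and measurement noises *)
  (forall t, vec_integrable P (w t)) -> (forall t, Evec P (w t) = 0) ->
  (forall t, vec_integrable P (v t)) -> (forall t, Evec P (v t) = 0) ->
  (* measurement model relative to the filter estimate *)
  (forall t x, z t.+1 x = H *m (F *m m t x + B *m u t + w t.+1 x) + v t.+1 x) ->
  (* filter with initial (m_0, S0) fed z_t *)
  (forall t x, m t.+1 x =
     kf_update F B H (kf_gain F Rw H Q S0 t.+1) (u t) (m t x) (z t.+1 x)) ->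
  (* filter with initial (mt_0, St0) fed the spoofed measurements z_t + eps_t *)
  (forall t x, mt t.+1 x =
     kf_update F B H (kf_gain F Rw H Q St0 t.+1) (u t) (mt t x)
       (z t.+1 x + eps t.+1)) ->
  (* E(m_0 - mt_0) = M0 *)
  vec_integrable P (fun x => m 0%N x - mt 0%N x) ->
  Evec P (fun x => m 0%N x - mt 0%N x) = M0 ->
  let A := fun t : nat => F - kf_gain F Rw H Q St0 t *m H *m F in
  let C := fun t : nat => - (kf_gain F Rw H Q St0 t *m eps t) in
  forall t : nat, (1 <= t)%N ->
    Evec P (fun x => m t x - mt t x) =
      (\prod_(i < t) A (t - i)%N) *m M0
      + \sum_(i < t.-1) (\prod_(j < i.+1) A (t - j)%N) *m C (t.-1 - i)%N
      + C t.
Proof.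
move=> hwi hwe hvi hve hz hm hmt hi0 he0 A C.
pose D t := fun x => m t x - mt t x.
pose K t := kf_gain F Rw H Q S0 t.
pose L t := kf_gain F Rw H Q St0 t.
have rec : forall t, D t.+1 = fun x =>
   A t.+1 *m D t x + (K t.+1 - L t.+1) *m (H *m w t.+1 x + 1%:M *m v t.+1 x + 0) + C t.+1.
  move=> t; apply/funext => x.
  by rewrite /D hm hmt hz; apply: rec_alg.
have noise : forall t, vec_integrable P (fun x => H *m w t x + 1%:M *m v t x + 0) /\
   Evec P (fun x => H *m w t x + 1%:M *m v t x + 0) = 0.
  move=> t; have [h1 h2] := @vec_affine _ _ _ P _ _ H 1%:M 0 (hwi t) (hvi t).
  by split => //; rewrite h2 hwe hve !mulmx0 !addr0.
pose Gen t := (\prod_(i < t) A (t - i)%N) *m M0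
      + \sum_(i < t) (\prod_(j < i) A (t - j)%N) *m C (t - i)%N.
have prodS : forall n k, \prod_(i < n.+1) A (k.+1 - i)%N = A k.+1 * \prod_(i < n) A (k - i)%N.
  move=> n k; rewrite big_ord_recl subn0; congr (_ * _); apply: eq_bigr => i _.
have sumS : forall k, \sum_(i < k.+1) \prod_(j < i) A (k.+1 - j)%N *m C (k.+1 - i)%N
   = C k.+1 + \sum_(i < k) A k.+1 *m (\prod_(j < i) A (k - j)%N *m C (k - i)%N).
  move=> k; rewrite big_ord_recl big_ord0 subn0 mul1mx; congr (_ + _); apply: eq_bigr => i _.
  rewrite lift0 prodS subSS mulmxA; congr (_ *m _).
have gen : forall t, vec_integrable P (D t) /\ Evec P (D t) = Gen t.
  elim => [|t [IHi IHe]].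
    split => //; rewrite /Gen big_ord0 big_ord0 mul1mx addr0; exact: he0.
  rewrite rec.
  have [n1 n2] := noise t.+1.
  have [h1 h2] := @vec_affine _ _ _ P _ _ (A t.+1) (K t.+1 - L t.+1) (C t.+1) IHi n1.
  split => //.
  rewrite h2 IHe n2 mulmx0 addr0 /Gen.
  rewrite (prodS t t) sumS mulmxDr mulmxA mulmx_sumr.
  rewrite [C t.+1 + _]addrC addrA.
  by [].
move=> t t1.
have [_ ->] := gen t.
case: t t1 => [//|t] _; rewrite /Gen [\sum_(i < t.+1) _]big_ord_recl big_ord0 subn0 mul1mx /=.
rewrite -addrA [C t.+1 + _]addrC; congr (_ + (_ + _)); apply: eq_bigr => i _.
Qed.
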